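(* Let $V$ and $\mathcal{N}_7^V$ be as follows: $V:\mathbb{C}^7\to\mathbb{C}^3\otimes\mathbb{C}^3$ is any isometry whose range is the orthogonal complement of $\operatorname{span}\{\ket{\phi_3^+},\ket{0}\otimes\ket{1}\}$ with $\ket{\phi_3^+}=\frac1{\sqrt3}\sum_{k=0}^2\ket{kk}$, and $\mathcal{N}_7^V(\rho)=\operatorname{Tr}_E(V\rho V^\dagger)$. Then for every $d\in\mathbb{N}$, $n\in\mathbb{N}$ and $M\in\mathcal{P}^{n\to n}(\mathcal{Q}_d)$ one has $\operatorname{Tr}M\le d$, so $\mathcal{F}_c(\mathcal{Q}_6)=6$; and $$\mathcal{F}_c^{\min}(\mathcal{N}_7^V)\ \ge\ \tfrac{20}{3}\ >\ 6=\mathcal{F}_c(\mathcal{Q}_6).$$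
   Context: $\mathcal{P}^{n\to m}(\mathcal{N}(\mathcal{Q}_{d_A}))$ is the set of $n\times m$ matrices $P_{ij}=\operatorname{Tr}[\Lambda_j\mathcal{N}(\rho_i)]$ with $\rho_i$ density matrices on the input space and $\{\Lambda_j\}$ a POVM on the output space; $\mathcal{P}^{n\to m}(\mathcal{Q}_d)$ is this set for the identity channel on $\mathcal{L}(\mathbb{C}^d)$. The classical transmission fidelity of a channel $\mathcal{N}$ is $\mathcal{F}_c(\mathcal{N})=\sup_{n\in\mathbb{N}}\sup_{P\in\mathcal{P}^{n\to n}(\mathcal{N}(\mathcal{Q}_{d_A}))}\operatorname{Tr}P$. For a channel with isometry $V:\mathbb{C}^{d_A}\to\mathbb{C}^{d_B}\otimes\mathbb{C}^{d_E}$, $\mathcal{P}^{n\to m}_{\min}(\mathcal{N},V)$ is the set of matrices $P_{ij}=\sum_{l,k}q(j\mid l,k)\operatorname{Tr}[(\Lambda^B_l\otimes\Lambda^E_k)V\rho_iV^\dagger]$ with independent finite-outcome POVMs $\{\Lambda^B_l\}$ on $\mathbb{C}^{d_B}$, $\{\Lambda^E_k\}$ on $\mathbb{C}^{d_E}$ and stochastic post-processing $q$; and $\mathcal{F}_c^{\min}(\mathcal{N})=\sup_n\sup_{P\in\mathcal{P}^{n\to n}_{\min}(\mathcal{N},V)}\operatorname{Tr}P$. *)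

(* Defs.v *)
From HB Require Import structures.
From mathcomp Require Import all_boot all_order all_algebra.
From mathcomp Require Import all_classical all_reals.
From mathcomp Require Import ereal.
From mathcomp Require Import complex mxtens.

Set Implicit Arguments.
Unset Strict Implicit.
Unset Printing Implicit Defensive.

Import Order.TTheory GRing.Theory Num.Theory.
Local Open Scope ring_scope.
Local Open Scope classical_set_scope.

Section Quantum.
Variable R : realType.
Local Notation C := R[i].

Definition adj {m n} (A : 'M[C]_(m, n)) : 'M[C]_(n, m) := map_mx (@conjc R) A^T.

(* positive semidefinite: <x|A|x> >= 0 (real and nonnegative) for all x *)
Definition psd {d} (A : 'M[C]_d) : Prop :=
  forall x : 'cV[C]_d, 0 <= (adj x *m A *m x) 0 0.

Definition density {d} (rho : 'M[C]_d) : Prop := psd rho /\ \tr rho = 1.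

Definition POVM {d m} (L : 'I_m -> 'M[C]_d) : Prop :=
  (forall j, psd (L j)) /\ \sum_(j < m) L j = 1%:M.

Definition isometry_mx {dA dO} (V : 'M[C]_(dO, dA)) : Prop := adj V *m V = 1%:M.

Definition ptraceE {dB dE} (X : 'M[C]_(dB * dE)) : 'M[C]_dB :=
  \matrix_(i, j) \sum_(k < dE) X (mxtens_index (i, k)) (mxtens_index (j, k)).

Definition chan_of_iso {dA dB dE} (V : 'M[C]_(dB * dE, dA)) (rho : 'M[C]_dA)
  : 'M[C]_dB := ptraceE (V *m rho *m adj V).

Definition idch d : 'M[C]_d -> 'M[C]_d := id.

Definition Pset {dA dB} (N : 'M[C]_dA -> 'M[C]_dB) n m (P : 'M[C]_(n, m)) : Prop :=
  exists (rho : 'I_n -> 'M[C]_dA) (L : 'I_m -> 'M[C]_dB),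
    (forall i, density (rho i)) /\ POVM L /\
    P = \matrix_(i, j) \tr (L j *m N (rho i)).

(* classical transmission fidelity F_c(N) (trace of P is real; we take Re) *)
Definition Fc {dA dB} (N : 'M[C]_dA -> 'M[C]_dB) : \bar R :=
  ereal_sup [set x | exists (n : nat) (P : 'M[C]_(n, n)), Pset N P /\ x = (complex.Re (\tr P))%:E].

Definition Pmin {dA dB dE} (V : 'M[C]_(dB * dE, dA)) n m (P : 'M[C]_(n, m)) : Prop :=
  exists (rho : 'I_n -> 'M[C]_dA) (a b : nat)
         (LB : 'I_a -> 'M[C]_dB) (LE : 'I_b -> 'M[C]_dE)
         (q : 'I_m -> 'I_a -> 'I_b -> R),
    (forall i, density (rho i)) /\ POVM LB /\ POVM LE /\
    (forall j l k, 0 <= q j l k) /\ (forall l k, \sum_(j < m) q j l k = 1) /\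
    P = \matrix_(i, j) \sum_(l < a) \sum_(k < b)
          (q j l k)%:C%C * \tr ((LB l *t LE k) *m (V *m rho i *m adj V)).

Definition Fcmin {dA dB dE} (V : 'M[C]_(dB * dE, dA)) : \bar R :=
  ereal_sup [set x | exists (n : nat) (P : 'M[C]_(n, n)), Pmin V P /\ x = (complex.Re (\tr P))%:E].

Definition ket {d} (i : 'I_d) : 'cV[C]_d := delta_mx i 0.

Definition phi3 : 'M[C]_(3 * 3, 1 * 1) :=
  ((Num.sqrt (3 : R))^-1)%:C%C *: \sum_(k < 3) (ket k *t ket k).

Definition ket01 : 'M[C]_(3 * 3, 1 * 1) := ket (inord 0 : 'I_3) *t ket (inord 1 : 'I_3).

Definition range_N7 (V : 'M[C]_(3 * 3, 7)) : Prop :=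
  forall x : 'cV[C]_(3 * 3),
    (exists y : 'cV[C]_7, x = V *m y) <->
    (adj phi3 *m x = 0 /\ adj ket01 *m x = 0).

End Quantum.

(* Main.v *)
Require Import Defs.
From HB Require Import structures.
From mathcomp Require Import all_boot all_order all_algebra.
From mathcomp Require Import all_classical all_reals.
From mathcomp Require Import ereal.
From mathcomp Require Import complex mxtens.
From mathcomp Require Import lra ring.
Import Order.TTheory GRing.Theory Num.Theory.
Local Open Scope ring_scope.

Section Aux.
Variable R : realType.
Local Notation C := R[i].
Local Notation Re := (@complex.Re R).
Local Notation Im := (@complex.Im R).

Lemma adjE m n (A : 'M[C]_(m,n)) i j : adj A i j = (A j i)^*%C.
Proof. by rewrite !mxE. Qed.

Lemma adjM m n p (A : 'M[C]_(m,n)) (B : 'M[C]_(n,p)) : adj (A *m B) = adj B *m adj A.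
Proof. by rewrite /adj trmx_mul map_mxM. Qed.

Lemma adjD m n (A B : 'M[C]_(m,n)) : adj (A + B) = adj A + adj B.
Proof. by apply/matrixP=> i j; rewrite !mxE rmorphD. Qed.

Lemma adjZ m n a (A : 'M[C]_(m,n)) : adj (a *: A) = a^*%C *: adj A.
Proof. by apply/matrixP=> i j; rewrite !mxE rmorphM. Qed.

Lemma adjK m n (A : 'M[C]_(m,n)) : adj (adj A) = A.
Proof. by apply/matrixP=> i j; rewrite !mxE conjcK. Qed.

Lemma adj_delta m n (i : 'I_m) (j : 'I_n) : adj (delta_mx i j : 'M[C]_(m,n)) = delta_mx j i.
Proof. by apply/matrixP=> a b; rewrite !mxE andbC; apply: conjc_nat. Qed.

Lemma form3 d (A : 'M[C]_d) a b : ((delta_mx 0 a : 'M[C]_(1,d)) *m A *m (delta_mx b 0 : 'M[C]_(d,1))) 0 0 = A a b.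
Proof. by rewrite -rowE -colE !mxE. Qed.

Lemma form3M d (A : 'M[C]_d) a b : ((delta_mx 0 a : 'M[C]_(1,d)) *m A *m (delta_mx b 0 : 'M[C]_(d,1))) = const_mx (A a b).
Proof. by apply/matrixP=> i j; rewrite !ord1 form3 mxE. Qed.

Lemma psdQ d (A : 'M[C]_d) a b (al be : C) : psd A ->
  0 <= al^*%C * al * A a a + al^*%C * be * A a b + be^*%C * al * A b a + be^*%C * be * A b b.
Proof.
rewrite /psd => /(_ (al *: delta_mx a 0 + be *: delta_mx b 0)).
rewrite adjD !adjZ !adj_delta !mulmxDl !mulmxDr -!scalemxAl -!scalemxAr.
by rewrite !form3M !mxE !mulrA !addrA.
Qed.

Lemma quad_facts (p q s t : C) :
  (forall al be : C, 0 <= al^*%C * al * p + al^*%C * be * s + be^*%C * al * t + be^*%C * be * q) ->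
  [/\ Im p = 0, 0 <= Re p, t = s^*%C & Re s ^+ 2 + Im s ^+ 2 <= Re p * Re q].
Proof.
case: p => p1 p2; case: q => q1 q2; case: s => s1 s2; case: t => t1 t2 /= H.
have H1 := H 1 0; have H2 := H 0 1; have H3 := H 1 1; have H4 := H 1 'i%C.
rewrite !lecE /= in H1 H2 H3 H4.
move: H1 H2 H3 H4 => /andP[/eqP E1 L1] /andP[/eqP E2 L2] /andP[/eqP E3 L3] /andP[/eqP E4 L4].
have p20 : p2 = 0 by lra.
have q20 : q2 = 0 by lra.
have ts2 : t2 = - s2 by lra.
have ts1 : t1 = s1 by lra.
split => //; first lra.
  by rewrite ts1 ts2.
have Hm : forall m : R, 0 <= m ^+ 2 * p1 - 2 * m * (s1 ^+ 2 + s2 ^+ 2) + (s1 ^+ 2 + s2 ^+ 2) * q1.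
  move=> m; have := H (m +i* 0)%C ((- s1) +i* s2)%C.
  rewrite lecE /= => /andP[_]; rewrite p20 q20 ts1 ts2.
  move=> HH; nra.
have [q0|qpos] : q1 = 0 \/ 0 < q1 by lra.
  rewrite q0 mulr0 leNgt; apply/negP => Npos.
  have := Hm ((s1 ^+ 2 + s2 ^+ 2) / (p1 + 1)).
  set m := (_ / _).
  have hm : m * (p1 + 1) = s1 ^+ 2 + s2 ^+ 2 by rewrite /m mulfVK //; lra.
  have mpos : 0 < m by rewrite /m divr_gt0 //; lra.
  rewrite q0; nra.
have := Hm q1; nra.
Qed.

Lemma psdF d (A : 'M[C]_d) a b : psd A ->
  [/\ Im (A a a) = 0, 0 <= Re (A a a), A b a = (A a b)^*%C &
      Re (A a b) ^+ 2 + Im (A a b) ^+ 2 <= Re (A a a) * Re (A b b)].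
Proof. by move=> HA; apply: quad_facts => al be; apply: psdQ. Qed.
Arguments psdF {d A} a b.

Lemma ReD (x y : C) : Re (x + y) = Re x + Re y. Proof. by case: x; case: y. Qed.
Lemma ImD (x y : C) : Im (x + y) = Im x + Im y. Proof. by case: x; case: y. Qed.
Lemma Re_sum I (r : seq I) P (F : I -> C) : Re (\sum_(i <- r | P i) F i) = \sum_(i <- r | P i) Re (F i).
Proof. exact: (big_morph _ ReD). Qed.
Lemma Im_sum I (r : seq I) P (F : I -> C) : Im (\sum_(i <- r | P i) F i) = \sum_(i <- r | P i) Im (F i).
Proof. exact: (big_morph _ ImD). Qed.

Lemma key (s t u v p q P Q : R) : 0 <= p -> 0 <= q -> 0 <= P -> 0 <= Q ->
  s ^+ 2 + t ^+ 2 <= p * q -> u ^+ 2 + v ^+ 2 <= P * Q -> s * u + t * v <= (p * Q + q * P) / 2.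
Proof.
move=> hp hq hP hQ h1 h2.
have e1 : (s * u + t * v) ^+ 2 <= (s ^+ 2 + t ^+ 2) * (u ^+ 2 + v ^+ 2).
  have := sqr_ge0 (s * v - t * u); nra.
have e2 : (s ^+ 2 + t ^+ 2) * (u ^+ 2 + v ^+ 2) <= (p * q) * (P * Q).
  apply: ler_pM => //; nra.
have e3 : (p * q) * (P * Q) <= ((p * Q + q * P) / 2) ^+ 2.
  have := sqr_ge0 (p * Q - q * P); nra.
have e4 : 0 <= (p * Q + q * P) / 2 by nra.
nra.
Qed.
Arguments key {s t u v p q P Q}.

Lemma trM d (A B : 'M[C]_d) : \tr (A *m B) = \sum_a \sum_b A a b * B b a.
Proof. by rewrite /mxtrace; apply: eq_bigr => a _; rewrite mxE. Qed.

Lemma tr_psd d (L rho : 'M[C]_d) : psd L -> psd rho ->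
  Im (\tr (L *m rho)) = 0 /\ Re (\tr (L *m rho)) <= Re (\tr L) * Re (\tr rho).
Proof.
move=> HL Hr; rewrite trM; split.
  rewrite Im_sum; under eq_bigr do rewrite Im_sum.
  set S := (X in X = 0).
  have : S = - S.
    rewrite {1}/S exchange_big /= -sumrN; apply: eq_bigr => a _.
    rewrite -sumrN; apply: eq_bigr => b _.
    have [_ _ -> _] := psdF b a HL; have [_ _ -> _] := psdF a b Hr.
    by case: (L b a) => x y; case: (rho a b) => z w /=; lra.
  lra.
rewrite Re_sum /mxtrace !Re_sum.
apply: le_trans (_ : \sum_a \sum_b (Re (L a a) * Re (rho b b) + Re (L b b) * Re (rho a a)) / 2 <= _).
  apply: ler_sum => a _; rewrite Re_sum; apply: ler_sum => b _.
  have [La0 La Lba Lm] := psdF a b HL; have [_ Lb _ _] := psdF b a HL.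
  have [ra0 ra rba rm] := psdF a b Hr; have [_ rb _ _] := psdF b a Hr.
  rewrite rba; move: Lm rm; case: (L a b) => s t; case: (rho a b) => u v /= Lm rm.
  have := key La Lb ra rb Lm rm.
  lra.
set p := fun a => Re (L a a); set q := fun a => Re (rho a a).
rewrite le_eqVlt; apply/orP; left; apply/eqP.
have E : \sum_a \sum_b (p b * q a) = \sum_a \sum_b (p a * q b) by rewrite exchange_big.
have F : \sum_a \sum_b (p a * q b) = (\sum_a p a) * (\sum_b q b).
  by rewrite mulr_suml; apply: eq_bigr => a _; rewrite mulr_sumr.
transitivity ((\sum_a \sum_b (p a * q b) + \sum_a \sum_b (p b * q a)) / 2).
  rewrite mulrDl !mulr_suml -big_split /=; apply: eq_bigr => a _.
  by rewrite !mulr_suml -big_split; apply: eq_bigr => b _; rewrite mulrDl.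
rewrite E F; lra.
Qed.
Arguments tr_psd {d L rho}.

Lemma natC (k : nat) : (k%:R : C) = (k%:R : R)%:C%C.
Proof. by rewrite rmorph_nat. Qed.

Lemma part1 d n (M : 'M[C]_(n,n)) : Pset (@idch R d) M -> \tr M <= d%:R.
Proof.
case=> rho [L [Hrho [[HLpsd HLsum] ->]]].
have -> : \tr (\matrix_(i, j) \tr (L j *m idch (R:=R) (rho i))) = \sum_i \tr (L i *m rho i).
  by rewrite /mxtrace; apply: eq_bigr => i _; rewrite mxE.
rewrite natC lecE /=; apply/andP; split.
  rewrite (@Im_sum _ _ _ (fun i => \tr (L i *m rho i))) big1 // => i _; by case: (tr_psd (HLpsd i) (Hrho i).1).
have -> : (d%:R : R) = Re (\tr (\sum_i L i)) by rewrite HLsum mxtrace1 natC.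
have -> : \tr (\sum_i L i) = \sum_i \tr (L i) by rewrite raddf_sum.
rewrite [X in _ <= X]Re_sum (@Re_sum _ _ _ (fun i => \tr (L i *m rho i))); apply: ler_sum => i _.
have [_ H] := tr_psd (HLpsd i) (Hrho i).1.
by move: H; rewrite (Hrho i).2 /= mulr1.
Qed.

Arguments part1 {d n M}.

Lemma trE d (A : 'M[C]_d) : \tr A = \sum_i A i i. Proof. by []. Qed.

Lemma psd_delta d (i : 'I_d) : psd (delta_mx i i : 'M[C]_d).
Proof.
move=> x; rewrite -(mul_delta_mx (0 : 'I_1)) mulmxA. rewrite -colE -mulmxA -rowE.
rewrite mxE big_ord1 !mxE mulrC; exact: mulcJ_ge0.
Qed.

Lemma tr_delta d (i : 'I_d) : \tr (delta_mx i i : 'M[C]_d) = 1.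
Proof.
rewrite /mxtrace (bigD1 i) //= big1 ?addr0 => [|a /negbTE ai]; rewrite mxE ?eqxx ?ai //.
Qed.

Lemma sum_delta d : \sum_(j < d) (delta_mx j j : 'M[C]_d) = 1%:M.
Proof.
apply/matrixP => a b; rewrite summxE (bigD1 a) //= big1 ?addr0 => [|j /negbTE ja].
  by rewrite !mxE eqxx /= eq_sym.
by rewrite mxE eq_sym ja.
Qed.

Lemma Fc6 : Fc (@idch R 6) = (6%:R)%:E.
Proof.
apply/le_anti/andP; split.
  apply: ge_ereal_sup => _ [n [P [HP ->]]].
  have := part1 HP; rewrite natC lecE /= => /andP[_ H].
  by rewrite lee_fin.
apply: ereal_sup_ubound; exists 6%N.
exists (\matrix_(i, j) \tr ((delta_mx j j : 'M[C]_6) *m idch (delta_mx i i))).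
split.
  exists (fun i => delta_mx i i); exists (fun j => delta_mx j j); split.
    by move=> i; split; [exact: psd_delta | exact: tr_delta].
  split=> //; by split; [move=> j; exact: psd_delta | exact: sum_delta].
have -> : \tr (\matrix_(i, j) \tr ((delta_mx j j : 'M[C]_6) *m idch (delta_mx i i))) = 6%:R.
  rewrite (@trE _ (\matrix_(i, j) _)).
  under eq_bigr do rewrite mxE /idch mul_delta_mx tr_delta.
  by rewrite sumr_const card_ord.
by rewrite natC.
Qed.

Lemma sum_tens m n (F : 'I_(m * n) -> C) :
  \sum_p F p = \sum_(a < m) \sum_(b < n) F (mxtens_index (a, b)).
Proof.
rewrite pair_bigA /= (reindex (@mxtens_index m n)) /=.
  by apply: eq_bigr => -[a b].
by exists (@mxtens_unindex m n) => x _; [exact: mxtens_indexK | exact: mxtens_unindexK].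
Qed.

Lemma sum_tensR m n (F : 'I_(m * n) -> R) :
  \sum_p F p = \sum_(a < m) \sum_(b < n) F (mxtens_index (a, b)).
Proof.
rewrite pair_bigA /= (reindex (@mxtens_index m n)) /=.
  by apply: eq_bigr => -[a b].
by exists (@mxtens_unindex m n) => x _; [exact: mxtens_indexK | exact: mxtens_unindexK].
Qed.

Lemma idx_eq m n (x y : 'I_m * 'I_n) : (mxtens_index x == mxtens_index y) = (x == y).
Proof. exact: (inj_eq (can_inj (@mxtens_indexK m n))). Qed.

Lemma tens_delta m n p q (i : 'I_m) (j : 'I_n) (i' : 'I_p) (j' : 'I_q) :
  (delta_mx i j : 'M[C]_(m,n)) *t (delta_mx i' j' : 'M[C]_(p,q)) =
  delta_mx (mxtens_index (i, i')) (mxtens_index (j, j')).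
Proof.
apply/matrixP => x y; case: (mxtens_indexP x) => a b; case: (mxtens_indexP y) => c e.
rewrite tensmxE !mxE !idx_eq !xpair_eqE.
by do 4 case: (_ == _); rewrite /= ?mulr1 ?mulr0 ?mul1r ?mul0r.
Qed.

Lemma adj_tens m n p q (A : 'M[C]_(m,n)) (B : 'M[C]_(p,q)) : adj (A *t B) = adj A *t adj B.
Proof. by apply/matrixP => i j; rewrite !mxE rmorphM. Qed.

Lemma adj_sum m n I (r : seq I) P (F : I -> 'M[C]_(m,n)) :
  adj (\sum_(i <- r | P i) F i) = \sum_(i <- r | P i) adj (F i).
Proof.
apply: (big_morph _ (@adjD m n)).
by apply/matrixP => i j; rewrite !mxE conjc0.
Qed.

Lemma row_entry n (r : 'I_1) (p : 'I_n) (u : 'cV[C]_n) : (delta_mx r p *m u) 0 0 = u p 0.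
Proof. by rewrite (ord1 r) -rowE mxE. Qed.

Lemma tr_deltaM n (p : 'I_n) (A : 'M[C]_n) : \tr (delta_mx p p *m A) = A p p.
Proof.
rewrite -(mul_delta_mx (0 : 'I_1)) -mulmxA mxtrace_mulC -rowE -colE.
by rewrite trE big_ord1 !mxE.
Qed.

Lemma entry11 (A B : 'M[C]_1) : (A *m B) 0 0 = A 0 0 * B 0 0.
Proof. by rewrite mxE big_ord1. Qed.

Lemma rank1 m n (V : 'M[C]_(m,n)) (u : 'cV[C]_m) (y : 'cV[C]_n) (k : R) :
  isometry_mx V -> u = V *m y -> (adj u *m u) 0 0 = k%:C%C -> 0 < k ->
  density ((k^-1)%:C%C *: (y *m adj y)) /\
  V *m ((k^-1)%:C%C *: (y *m adj y)) *m adj V = (k^-1)%:C%C *: (u *m adj u).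
Proof.
move=> HV Hu Hk kpos.
have Hyy : (adj y *m y) 0 0 = k%:C%C.
  by rewrite -Hk Hu adjM mulmxA -(mulmxA (adj y)) HV mulmx1.
split; last first.
  by rewrite -scalemxAr -scalemxAl Hu adjM !mulmxA.
split.
  move=> x; rewrite -scalemxAr -scalemxAl mxE !mulmxA -(mulmxA (adj x *m y)) entry11.
  have -> : adj y *m x = adj (adj x *m y) by rewrite adjM adjK.
  rewrite adjE; apply: mulr_ge0; first by rewrite ler0c invr_ge0 ltW.
  exact: mulcJ_ge0.
rewrite linearZ /= mxtrace_mulC trE big_ord1 Hyy -rmorphM /= mulVf //.
by apply: lt0r_neq0.
Qed.

Definition hh (j l k : nat) : R :=
  match j, l, k with
  | 0, 0, 2 | 1, 1, 0 | 2, 1, 2 | 3, 2, 0 | 4, 2, 1 => 1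
  | 5, 0, 0 => 2 | 5, 1, 1 => -1 | 5, 2, 2 => -1
  | 6, 1, 1 => 1 | 6, 2, 2 => -1
  | _, _, _ => 0
  end.

Definition uu (j : nat) : 'cV[C]_(3 * 3) :=
  \col_p (hh j (@mxtens_unindex 3 3 p).1 (@mxtens_unindex 3 3 p).2)%:C%C.

Definition kk (j : nat) : R := \sum_(a < 3) \sum_(b < 3) hh j a b ^+ 2.

Lemma uu_idx j (a b : 'I_3) : uu j (mxtens_index (a, b)) 0 = (hh j a b)%:C%C.
Proof. by rewrite mxE mxtens_indexK. Qed.

Lemma uu_norm j : (adj (uu j) *m uu j) 0 0 = (kk j)%:C%C.
Proof.
rewrite mxE sum_tens /kk rmorph_sum; apply: eq_bigr => a _.
rewrite rmorph_sum; apply: eq_bigr => b _.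
by rewrite adjE uu_idx conjc_real -rmorphM expr2.
Qed.

Lemma kk_pos (j : 'I_7) : 0 < kk j.
Proof.
rewrite /kk !big_ord_recr !big_ord0 /=.
by case: j => [[|[|[|[|[|[|[|j]]]]]]]] //= _; rewrite /hh /= !expr2; lra.
Qed.

Lemma mx11_eq0 (A : 'M[C]_(1,1)) : A 0 0 = 0 -> A = 0.
Proof. by move=> H; apply/matrixP => a b; rewrite (ord1 a) (ord1 b) H mxE. Qed.

Lemma hh_diag (j : 'I_7) : \sum_(k < 3) hh j k k = 0.
Proof.
rewrite !big_ord_recr big_ord0 /=.
by case: j => [[|[|[|[|[|[|[|j]]]]]]]] //= _; rewrite /hh /=; lra.
Qed.

Lemma uu_range (V : 'M[C]_(3 * 3, 7)) (j : 'I_7) : range_N7 V -> exists y, uu j = V *m y.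
Proof.
move=> HR; apply/HR; split; apply: mx11_eq0.
  rewrite /phi3 adjZ adj_sum -scalemxAl mxE mulmx_suml summxE.
  rewrite (eq_bigr (fun k : 'I_3 => (hh j k k)%:C%C)); last first.
    by move=> k _; rewrite adj_tens /ket adj_delta tens_delta row_entry uu_idx.
  by rewrite -rmorph_sum hh_diag mulr0.
rewrite /ket01 adj_tens /ket !adj_delta tens_delta row_entry uu_idx !inordK //.
by case: j => [[|[|[|[|[|[|[|j]]]]]]]].
Qed.

Definition ff (l k : nat) : nat :=
  match l, k with
  | 1, 0 => 1 | 1, 2 => 2 | 2, 0 => 3 | 2, 1 => 4
  | 0, 0 => 5 | 1, 1 => 6 | 2, 2 => 6 | _, _ => 0
  end.

Lemma ff_lt l k : (ff l k < 7)%N.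
Proof. by case: l => [|[|[|l]]]; case: k => [|[|[|k]]]. Qed.

Definition qq (j : 'I_7) (l k : 'I_3) : R := ((j : nat) == ff l k)%:R.

Lemma qq_sum (l k : 'I_3) : \sum_(j < 7) qq j l k = 1.
Proof.
rewrite (bigD1 (Ordinal (ff_lt l k))) //= /qq eqxx big1 ?addr0 // => j Hj.
suff -> : ((j : nat) == ff l k) = false by [].
by apply/negbTE; apply: contra Hj => /eqP Hj; apply/eqP/val_inj.
Qed.

Lemma score : \sum_(i < 7) \sum_(l < 3) \sum_(k < 3)
   qq i l k * ((kk i)^-1 * (hh i l k * hh i l k)) = 20%:R / 3%:R.
Proof.
have k0 : kk 0 = 1 by rewrite /kk !big_ord_recr !big_ord0 /= /hh /= !expr2; lra.
have k1 : kk 1 = 1 by rewrite /kk !big_ord_recr !big_ord0 /= /hh /= !expr2; lra.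
have k2 : kk 2 = 1 by rewrite /kk !big_ord_recr !big_ord0 /= /hh /= !expr2; lra.
have k3 : kk 3 = 1 by rewrite /kk !big_ord_recr !big_ord0 /= /hh /= !expr2; lra.
have k4 : kk 4 = 1 by rewrite /kk !big_ord_recr !big_ord0 /= /hh /= !expr2; lra.
have k5 : kk 5 = 6 by rewrite /kk !big_ord_recr !big_ord0 /= /hh /= !expr2; lra.
have k6 : kk 6 = 2 by rewrite /kk !big_ord_recr !big_ord0 /= /hh /= !expr2; lra.
rewrite !big_ord_recr !big_ord0 /= /qq /hh /= k0 k1 k2 k3 k4 k5 k6.
lra.
Qed.

Lemma part3 (V : 'M[C]_(3 * 3, 7)) : isometry_mx V -> range_N7 V ->
  ((20%:R / 3%:R : R)%:E <= Fcmin V)%E.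
Proof.
move=> HV HR.
have Hy : forall j : 'I_7, exists y : 'cV[C]_7, uu j = V *m y := fun j => @uu_range V j HR.
pose yy j := proj1_sig (cid (Hy j)).
have Hyy : forall j : 'I_7, uu j = V *m yy j := fun j => proj2_sig (cid (Hy j)).
pose rho (j : 'I_7) := ((kk j)^-1)%:C%C *: (yy j *m adj (yy j)).
have Hrho : forall j, density (rho j) /\ V *m rho j *m adj V = ((kk j)^-1)%:C%C *: (uu j *m adj (uu j)).
  by move=> j; apply: rank1 => //; [exact: uu_norm | exact: kk_pos].
pose P := \matrix_(i, j) \sum_(l < 3) \sum_(k < 3)
   (qq j l k)%:C%C * \tr (((delta_mx l l : 'M[C]_3) *t (delta_mx k k : 'M[C]_3)) *m (V *m rho i *m adj V)).
apply: le_trans (_ : ((complex.Re (\tr P))%:E <= _)%E); last first.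
  apply: ereal_sup_ubound; exists 7%N; exists P; split => //.
  exists rho, 3%N, 3%N, (fun l => delta_mx l l), (fun k => delta_mx k k), qq.
  split; first by move=> i; case: (Hrho i).
  split; first by split; [move=> j; exact: psd_delta | exact: sum_delta].
  split; first by split; [move=> j; exact: psd_delta | exact: sum_delta].
  split; first by move=> j l k; rewrite /qq ler0n.
  by split; first exact: qq_sum.
rewrite lee_fin -score le_eqVlt; apply/orP; left; apply/eqP.
rewrite trE Re_sum; apply: eq_bigr => i _.
rewrite mxE Re_sum; apply: eq_bigr => l _.
rewrite Re_sum; apply: eq_bigr => k _.
rewrite tens_delta (Hrho i).2 -scalemxAr linearZ /= tr_deltaM mxE big_ord1 adjE uu_idx.
by rewrite conjc_real -!rmorphM.
Qed.
End Aux.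

Theorem proposition2 (R : realType) (V : 'M[R[i]]_(3 * 3, 7)) :
  isometry_mx V -> range_N7 V ->
  (forall (d n : nat) (M : 'M[R[i]]_(n, n)), Pset (@idch R d) M -> \tr M <= d%:R)
  /\ Fc (@idch R 6) = (6%:R)%:E
  /\ ((20%:R / 3%:R : R)%:E <= Fcmin V)%E
  /\ ((20%:R / 3%:R : R)%:E > Fc (@idch R 6))%E.
Proof.
move=> HV HR; split; first by move=> d n M; exact: part1.
split; first exact: Fc6.
split; first exact: part3.
by rewrite Fc6 lte_fin; lra.
Qed.
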